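(* Let $\bar f:[a,b]\to\mathbb{R}_\mathcal{I}$ be an interval-valued function with $\bar f(x)=\langle f_c(x);f_w(x)\rangle$. Then $\bar f$ is differentiable at $x\in[a,b]$ if and only if $f_c$ is differentiable at $x$ and $f_w$ is multiplicatively differentiable at $x$. Moreover, in that case $$\bar f'(x)=\langle f_c'(x);\,f_w^*(x)\rangle,$$ where $f_w^*(x)=\lim_{h\to0}\left(\frac{f_w(x+h)}{f_w(x)}\right)^{1/h}=e^{(\ln f_w)'(x)}$ is the multiplicative derivative of $f_w$ at $x$.
   Context: An interval number is a closed interval $\bar a=[a_l,a_r]$ with $a_l<a_r$ real; $\mathbb{R}_\mathcal{I}$ is the set of interval numbers. Write $a_c=(a_l+a_r)/2$, $a_w=(a_r-a_l)/2>0$ and $\bar a=\langle a_c;a_w\rangle=[a_c-a_w,a_c+a_w]$. Operations: $\bar a-\bar b=\langle a_c-b_c;a_w/b_w\rangle$, and for real $k$, $k\bar a=\langle ka_c;a_w^k\rangle$; for real $h\neq0$, $\bar c/h$ means $\langle c_c/h;\,c_w^{1/h}\rangle$. Distance: $d(\bar a,\bar b)=\sqrt{(a_c-b_c)^2+(\ln a_w-\ln b_w)^2}$, and limits in $\mathbb{R}_\mathcal{I}$ are taken with respect to $d$. For an interval-valued function $\bar f:[a,b]\to\mathbb{R}_\mathcal{I}$, $\bar f(x)=[f_l(x),f_r(x)]$, put $f_c=(f_l+f_r)/2$, $f_w=(f_r-f_l)/2$. $\bar f$ is differentiable at $x_0$ if there is $\bar f'(x_0)\in\mathbb{R}_\mathcal{I}$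 with $\bar f'(x_0)=\lim_{h\to0}\frac{\bar f(x_0+h)-\bar f(x_0)}{h}$ (with $x_0+h\in[a,b]$). A positive function $g$ is multiplicatively differentiable at $x$ if $g^*(x)=\lim_{h\to0}(g(x+h)/g(x))^{1/h}$ exists. *)

(* Defs.v *)
From Stdlib Require Import Reals Lra.
From Coquelicot Require Import Coquelicot.
Open Scope R_scope.

Record interval := mkI { il : R; ir : R; ilr : il < ir }.

Definition ic (A : interval) : R := (il A + ir A) / 2.
Definition iw (A : interval) : R := (ir A - il A) / 2.

Lemma iw_pos (A : interval) : 0 < iw A.
Proof. unfold iw; destruct A as [l r h]; simpl; lra. Qed.

Lemma mkCW_proof (c w : R) : 0 < w -> c - w < c + w.
Proof. intros; lra. Qed.

(* <c; w> = [c - w, c + w] for w > 0 *)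
Definition mkCW (c w : R) (hw : 0 < w) : interval :=
  mkI (c - w) (c + w) (mkCW_proof c w hw).

Lemma isub_pos (A B : interval) : 0 < iw A / iw B.
Proof. apply Rdiv_lt_0_compat; apply iw_pos. Qed.

Definition isub (A B : interval) : interval :=
  mkCW (ic A - ic B) (iw A / iw B) (isub_pos A B).

Lemma idiv_pos (C : interval) (h : R) : 0 < Rpower (iw C) (1 / h).
Proof. unfold Rpower; apply exp_pos. Qed.

Definition idiv (C : interval) (h : R) : interval :=
  mkCW (ic C / h) (Rpower (iw C) (1 / h)) (idiv_pos C h).

Definition idist (A B : interval) : R :=
  sqrt ((ic A - ic B) ^ 2 + (ln (iw A) - ln (iw B)) ^ 2).

Definition incr_filter (a b x : R) : (R -> Prop) -> Prop :=
  within (fun h => h <> 0 /\ a <= x + h <= b) (locally 0).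

Definition I_derivative (f : R -> interval) (a b x : R) (L : interval) : Prop :=
  filterlim (fun h => idist (idiv (isub (f (x + h)) (f x)) h) L)
            (incr_filter a b x) (locally 0).

Definition has_deriv_on (g : R -> R) (a b x l : R) : Prop :=
  filterlim (fun h => (g (x + h) - g x) / h) (incr_filter a b x) (locally l).

(* multiplicative derivative of a positive function on [a, b] at x
   (limit taken in the positive reals) *)
Definition has_mderiv_on (g : R -> R) (a b x l : R) : Prop :=
  0 < l /\
  filterlim (fun h => Rpower (g (x + h) / g x) (1 / h)) (incr_filter a b x) (locally l).

Definition f_c (f : R -> interval) (x : R) : R := ic (f x).
Definition f_w (f : R -> interval) (x : R) : R := iw (f x).

(* Main.v *)
Require Import Defs.
From Stdlib Require Import Reals Lra.
From Coquelicot Require Import Coquelicot.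
From Stdlib Require Import ProofIrrelevance.
Open Scope R_scope.

Global Instance F_filter a b x : Filter (incr_filter a b x).
Proof. unfold incr_filter. apply within_filter, locally_filter. Qed.

Lemma F_nz a b x : incr_filter a b x (fun h => h <> 0).
Proof. unfold incr_filter, within. apply filter_forall. tauto. Qed.

Lemma F_proper a b x : a < b -> a <= x <= b -> ProperFilter' (incr_filter a b x).
Proof.
  intros Hab Hx. constructor; [|apply F_filter].
  unfold incr_filter, within. intros [eps He].
  destruct (Rle_dec x ((a+b)/2)) as [H1|H1].
  - set (h := Rmin (eps/2) ((b - x)/2)).
    assert (0 < h) by (unfold h; apply Rmin_pos; destruct eps; simpl; lra).
    assert (h <= eps/2) by apply Rmin_l. assert (h <= (b-x)/2) by apply Rmin_r.
    apply (He h). unfold ball; simpl; unfold AbsRing_ball; simpl.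
    unfold abs, minus, plus, opp; simpl. rewrite Ropp_0, Rplus_0_r, Rabs_right by lra.
    destruct eps; simpl in *; lra. split; lra.
  - set (h := Rmin (eps/2) ((x - a)/2)).
    assert (0 < h) by (unfold h; apply Rmin_pos; destruct eps; simpl; lra).
    assert (h <= eps/2) by apply Rmin_l. assert (h <= (x-a)/2) by apply Rmin_r.
    apply (He (-h)). unfold ball; simpl; unfold AbsRing_ball; simpl.
    unfold abs, minus, plus, opp; simpl. rewrite Ropp_0, Rplus_0_r, Rabs_left by lra.
    destruct eps; simpl in *; lra. split; lra.
Qed.

Lemma ic_mkCW c w hw : ic (mkCW c w hw) = c.
Proof. unfold ic, mkCW; simpl; lra. Qed.
Lemma iw_mkCW c w hw : iw (mkCW c w hw) = w.
Proof. unfold iw, mkCW; simpl; lra. Qed.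

Lemma dist_eq f x L h : h <> 0 ->
  idist (idiv (isub (f (x + h)) (f x)) h) L =
  sqrt (((f_c f (x+h) - f_c f x)/h - ic L)^2 +
        ((ln (f_w f (x+h)) - ln (f_w f x))/h - ln (iw L))^2).
Proof.
  intros Hh. unfold idist, idiv, isub, f_c, f_w.
  rewrite ic_mkCW, iw_mkCW, ic_mkCW, iw_mkCW.
  unfold Rpower. rewrite ln_exp, ln_div by apply iw_pos.
  f_equal. f_equal. f_equal. field. auto.
Qed.
Lemma sqrt_ge_abs u v : Rabs u <= sqrt (u^2 + v^2).
Proof.
  rewrite <- (sqrt_pow2 (Rabs u)) by apply Rabs_pos.
  apply sqrt_le_1_alt. rewrite pow2_abs. nra.
Qed.

Lemma sqrt_le_sum u v : sqrt (u^2 + v^2) <= Rabs u + Rabs v.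
Proof.
  rewrite <- (sqrt_pow2 (Rabs u + Rabs v)) by (generalize (Rabs_pos u) (Rabs_pos v); lra).
  apply sqrt_le_1_alt.
  replace ((Rabs u + Rabs v)^2) with (Rabs u ^2 + Rabs v ^2 + 2 * Rabs u * Rabs v) by ring.
  rewrite !pow2_abs. generalize (Rabs_pos u) (Rabs_pos v). nra.
Qed.

Lemma sqrt_lim {T} (F : (T -> Prop) -> Prop) {FF : Filter F} u v p q :
  filterlim (fun h => sqrt ((u h - p)^2 + (v h - q)^2)) F (locally 0) <->
  filterlim u F (locally p) /\ filterlim v F (locally q).
Proof.
  rewrite !filterlim_locally. split.
  - intros H. split; intros eps; specialize (H eps); revert H; apply filter_imp;
    intros h Hh; change (Rabs (sqrt ((u h - p)^2 + (v h - q)^2) - 0) < eps) in Hh;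
    rewrite Rminus_0_r, Rabs_right in Hh by (apply Rle_ge, sqrt_pos).
    + change (Rabs (u h - p) < eps). eapply Rle_lt_trans; [apply sqrt_ge_abs|]. apply Hh.
    + change (Rabs (v h - q) < eps). eapply Rle_lt_trans; [|apply Hh].
      rewrite Rplus_comm. apply sqrt_ge_abs.
  - intros [Hu Hv] eps.
    assert (He : 0 < eps/2) by (destruct eps; simpl; lra).
    specialize (Hu (mkposreal _ He)). specialize (Hv (mkposreal _ He)).
    generalize (filter_and _ _ Hu Hv). apply filter_imp. intros h [H1 H2].
    change (Rabs (u h - p) < eps/2) in H1. change (Rabs (v h - q) < eps/2) in H2.
    change (Rabs (sqrt ((u h - p)^2 + (v h - q)^2) - 0) < eps).
    rewrite Rminus_0_r, Rabs_right by (apply Rle_ge, sqrt_pos).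
    eapply Rle_lt_trans; [apply sqrt_le_sum|]. lra.
Qed.

Lemma mderiv_iff a b x (g : R -> R) (l : R) : (forall y, 0 < g y) -> 0 < l ->
  (filterlim (fun h => Rpower (g (x + h) / g x) (1 / h)) (incr_filter a b x) (locally l) <->
   filterlim (fun h => (ln (g (x + h)) - ln (g x)) / h) (incr_filter a b x) (locally (ln l))).
Proof.
  intros Hg Hl.
  assert (Heq : incr_filter a b x (fun h => exp ((ln (g (x + h)) - ln (g x)) / h)
                                  = Rpower (g (x + h) / g x) (1 / h))).
  { refine (filter_imp _ _ _ (F_nz a b x)). intros h Hh. unfold Rpower.
    rewrite ln_div by auto. f_equal. field. auto. }
  split.
  - intros H. apply (filterlim_ext_loc (fun h => ln (exp ((ln (g (x + h)) - ln (g x)) / h)))).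
    { apply filter_forall. intros; apply ln_exp. }
    apply (filterlim_comp _ _ _ _ ln _ (locally l)).
    + eapply filterlim_ext_loc; [|exact H].
      refine (filter_imp _ _ _ Heq). intros h E; symmetry; exact E.
    + apply continuous_ln; auto.
  - intros H. eapply filterlim_ext_loc; [exact Heq|].
    rewrite <- (exp_ln l Hl).
    apply (filterlim_comp _ _ _ _ exp _ (locally (ln l))); auto.
    apply continuous_exp.
Qed.

Theorem theorem4p2 (a b : R) (f : R -> interval) (x : R) :
  a < b -> a <= x <= b ->
  ((exists L : interval, I_derivative f a b x L) <->
   ((exists c' : R, has_deriv_on (f_c f) a b x c') /\
    (exists w' : R, has_mderiv_on (f_w f) a b x w'))) /\
  (forall (L : interval) (c' w' : R) (hw : 0 < w'),
     I_derivative f a b x L ->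
     has_deriv_on (f_c f) a b x c' ->
     has_mderiv_on (f_w f) a b x w' ->
     L = mkCW c' w' hw) /\
  (forall w' : R, has_mderiv_on (f_w f) a b x w' ->
     has_deriv_on (fun y => ln (f_w f y)) a b x (ln w')).
Proof.
  intros Hab Hx.
  assert (Hgw : forall y, 0 < f_w f y) by (intros; apply iw_pos).
  assert (KEY : forall L, I_derivative f a b x L <->
    has_deriv_on (f_c f) a b x (ic L) /\
    has_deriv_on (fun y => ln (f_w f y)) a b x (ln (iw L))).
  { intros L. unfold I_derivative, has_deriv_on.
    rewrite <- (sqrt_lim (incr_filter a b x)).
    split; apply filterlim_ext_loc; refine (filter_imp _ _ _ (F_nz a b x));
      intros h Hh; rewrite dist_eq; auto. }
  split; [|split].
  - split.
    + intros [L HL]. apply KEY in HL. destruct HL as [H1 H2].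
      split; [exists (ic L); auto|]. exists (iw L). split; [apply iw_pos|].
      apply mderiv_iff; auto. apply iw_pos.
    + intros [[c' Hc] [w' [Hw Hm]]]. exists (mkCW c' w' Hw). apply KEY.
      rewrite ic_mkCW, iw_mkCW. split; auto.
      apply mderiv_iff in Hm; auto.
  - intros L c' w' hw HL Hc [Hw Hm]. apply KEY in HL. destruct HL as [H1 H2].
    apply mderiv_iff in Hm; auto.
    pose proof (F_proper a b x Hab Hx) as FP.
    assert (E1 : ic L = c') by (eapply filterlim_locally_unique; eauto).
    assert (E2 : ln (iw L) = ln w') by (eapply filterlim_locally_unique; eauto).
    apply ln_inv in E2; [|apply iw_pos|auto].
    destruct L as [l r p]. unfold ic, iw in *; simpl in *.
    assert (Hl : l = c' - w') by lra. assert (Hr : r = c' + w') by lra.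
    unfold mkCW. revert p. rewrite Hl, Hr. intros p. f_equal. apply proof_irrelevance.
  - intros w' [Hw Hm]. apply mderiv_iff in Hm; auto.
Qed.
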